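(* Let $(\mathcal{X},d)$ be a finite metric space with initial forest given by a partition $\mathcal{P}=\{P_1,\dots,P_t\}$ and spanning trees $T_i$ on the parts with edge union $E_t$, and let $\gamma=\gamma(\mathcal{P})$ be its overlap parameter. Let $\textsf{MFC-Approx}$ be the algorithm $\textsf{MultiRepMFC}(R)$ where each $R_i=\{r_i\}$ consists of a single arbitrary point $r_i\in P_i$. Then $\textsf{MFC-Approx}$ returns a spanning tree of weight at most $2$ times the optimal MFC value (a 2-approximation for MFC) and at most $2\gamma$ times the weight of a minimum spanning tree of $G_{\mathcal{X}}$ (a $2\gamma$-approximation for metric MST).
   Context: $(\mathcal{X},d)$ is a finite metric space and $G_{\mathcal{X}}$ is the complete graph on $\mathcal{X}$ with edge weights $w_{\mathcal{X}}(u,v)=d(u,v)$; for an edge set $F$, $w_{\mathcal{X}}(F)=\sum_{e\in F}w_{\mathcal{X}}(e)$. For $A,B\subseteq\mathcal{X}$, $d(A,B)=\min_{a\in A,b\in B}d(a,b)$. An initial forest consists of a partition $\mathcal{P}=\{P_1,\dots,P_t\}$ of $\mathcal{X}$ and, for each $i$, a spanning tree $T_i$ of the complete graph on $P_i$; $E_t$ is the union of their edge sets. The Metric Forest Completion (MFC) problem: find a minimum-weight spanning tree of $G_{\mathcal{X}}$ containing $E_t$. Overlap parameter: with $\mathcal{T}_{\mathcal{X}}$ the set of minimum spanning trees of $G_{\mathcal{X}}$ and $T(\mathcal{P})$ the edges of $T$ with both endpoints in the same part, $\gamma(\mathcal{P})=w_{\mathcal{X}}(E_t)/\max_{T\in\mathcal{T}_{\mathcal{X}}}w_{\mathcal{X}}(T(\mathcal{P}))$.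 Algorithm $\textsf{MultiRepMFC}(R)$, for nonempty $R_i\subseteq P_i$: for each pair $i\ne j$ set $\hat w(v_i,v_j)=\min\{d(P_i,R_j),d(P_j,R_i)\}$ and record a point pair attaining it; compute a minimum spanning tree of the complete graph on $v_1,\dots,v_t$ with weights $\hat w$; return $E_t$ together with the recorded point pairs of the edges of this tree. *)

(* Defs.v *)
From HB Require Import structures.
From mathcomp Require Import all_boot all_order all_algebra.
Set Implicit Arguments. Unset Strict Implicit. Unset Printing Implicit Defensive.
Import Order.TTheory GRing.Theory Num.Theory.
Local Open Scope ring_scope.

Section Graphs.
Variable R : realFieldType.
Variable U : finType.

(* Undirected simple graphs on U: an edge is a 2-element subset of U. *)

(* Weight of an edge {a,b} under a (symmetric) cost c: (c a b + c b a)/2 = c a b. *)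
Definition wedge (c : U -> U -> R) (e : {set U}) : R :=
  (\sum_(x in e) \sum_(y in e | x != y) c x y) / 2%:R.

Definition wset (c : U -> U -> R) (F : {set {set U}}) : R :=
  \sum_(e in F) wedge c e.

Definition adj (F : {set {set U}}) : rel U :=
  fun x y => (x != y) && ([set x; y] \in F).

Definition edges_in (V : {set U}) (F : {set {set U}}) : bool :=
  [forall e in F, (#|e| == 2%N) && (e \subset V)].

Definition connected_on (V : {set U}) (F : {set {set U}}) : bool :=
  [forall x in V, forall y in V, connect (adj F) x y].

Definition acyclic (F : {set {set U}}) : bool :=
  [forall e in F, forall x, forall y,
     ((e == [set x; y]) && (x != y)) ==> ~~ connect (adj (F :\ e)) x y].

Definition is_spanning_tree (V : {set U}) (F : {set {set U}}) : bool :=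
  [&& edges_in V F, connected_on V F & acyclic F].

Definition is_mst (V : {set U}) (c : U -> U -> R) (F : {set {set U}}) : bool :=
  is_spanning_tree V F &&
  [forall F' : {set {set U}}, is_spanning_tree V F' ==> (wset c F <= wset c F')].

End Graphs.

Section MFC.
Variable R : realFieldType.
Variable T : finType.

Definition is_metric (d : T -> T -> R) : Prop :=
  (forall x y, d x y = 0 <-> x = y) /\
  (forall x y, d x y = d y x) /\
  (forall x y z, d x z <= d x y + d y z).

Definition Et (P : {set {set T}}) (tr : {set T} -> {set {set T}}) : {set {set T}} :=
  \bigcup_(B in P) tr B.

Definition intra (P : {set {set T}}) (F : {set {set T}}) : {set {set T}} :=
  [set e in F | [exists B in P, e \subset B]].

(* max over the MSTs T of G_X of w(T(P)) (weights are >= 0 and MSTs exist,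
   so the default 0 does not matter) *)
Definition max_intra_mst (d : T -> T -> R) (P : {set {set T}}) : R :=
  \big[Num.max/0]_(F : {set {set T}} | is_mst [set: T] d F) wset d (intra P F).

Definition gamma (d : T -> T -> R) (P : {set {set T}})
  (tr : {set T} -> {set {set T}}) : R :=
  wset d (Et P tr) / max_intra_mst d P.

(* Candidate point pairs for the pair of parts (B, C) in MultiRepMFC with
   R_B = {r B}, R_C = {r C}: pairs realizing d(B, R_C) or d(C, R_B),
   written as (point of B, point of C). *)
Definition cand (r : {set T} -> T) (B C : {set T}) (x y : T) : bool :=
  ((x \in B) && (y == r C)) || ((x == r B) && (y \in C)).

(* rec B C is a recorded point pair attaining
   hat w(v_B, v_C) = min{d(B, R_C), d(C, R_B)} *)
Definition rec_ok (d : T -> T -> R) (P : {set {set T}}) (r : {set T} -> T)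
  (rec : {set T} -> {set T} -> T * T) : Prop :=
  forall B C, B \in P -> C \in P -> B != C ->
    [/\ cand r B C (rec B C).1 (rec B C).2,
        (forall a b, cand r B C a b -> d (rec B C).1 (rec B C).2 <= d a b)
      & rec C B = ((rec B C).2, (rec B C).1)].

Definition hatw (d : T -> T -> R) (rec : {set T} -> {set T} -> T * T)
  (B C : {set T}) : R := d (rec B C).1 (rec B C).2.

Definition mfc_output (P : {set {set T}}) (tr : {set T} -> {set {set T}})
  (rec : {set T} -> {set T} -> T * T) (M : {set {set {set T}}}) : {set {set T}} :=
  Et P tr :|: [set [set (rec B C).1; (rec B C).2] | B in P, C in P & [set B; C] \in M].

End MFC.

(* Main.v *)
Require Import Defs.
From HB Require Import structures.
From mathcomp Require Import all_boot all_order all_algebra.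
From mathcomp Require Import ring lra.
Set Implicit Arguments. Unset Strict Implicit. Unset Printing Implicit Defensive.
Import Order.TTheory GRing.Theory Num.Theory.
Local Open Scope ring_scope.

Lemma connect_map (T1 T2 : finType) (e1 : rel T1) (e2 : rel T2) (f : T1 -> T2) :
  (forall u v, e1 u v -> connect e2 (f u) (f v)) ->
  forall x y, connect e1 x y -> connect e2 (f x) (f y).
Proof.
move=> H x y /connectP [p pth ->]; elim: p x pth => [|z p IH] x /=.
  by rewrite connect0.
by move/andP=> [exz pz]; exact: connect_trans (H _ _ exz) (IH _ pz).
Qed.

Lemma connect_cut (T1 : finType) (e1 : rel T1) (K : {pred T1}) :
  (forall u v, e1 u v -> (u \in K) = (v \in K)) ->
  forall x y, connect e1 x y -> (x \in K) = (y \in K).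
Proof.
move=> H x y /connectP [p pth ->]; elim: p x pth => [|z p IH] x //=.
by move/andP=> [exz pz]; rewrite (H _ _ exz) (IH _ pz).
Qed.

Lemma set2_eq (U : finType) (u v x y : U) :
  [set u; v] = [set x; y] -> (u = x /\ v = y) \/ (u = y /\ v = x).
Proof.
move=> E.
have hu : u \in [set x; y] by rewrite -E set21.
have hv : v \in [set x; y] by rewrite -E set22.
have hx : x \in [set u; v] by rewrite E set21.
have hy : y \in [set u; v] by rewrite E set22.
move: hu hv hx hy; rewrite !inE.
case/orP=> /eqP hu; case/orP=> /eqP hv; subst; try by [left|right].
- by move=> _; rewrite orbb => /eqP ->; left.
- by rewrite orbb => /eqP -> _; left.
Qed.

Section Gen.
Variable U : finType.
Implicit Types F S : {set {set U}}.

Lemma adj_sym F : symmetric (adj F).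
Proof. by move=> x y; rewrite /adj eq_sym setUC. Qed.

Lemma connect_adj_sym F x y : connect (adj F) x y = connect (adj F) y x.
Proof. exact: (sym_connect_sym (adj_sym F)). Qed.

Lemma adj_sub F F' : F \subset F' -> forall x y, adj F x y -> adj F' x y.
Proof. by move=> sF x y /andP [nxy /(subsetP sF) h]; rewrite /adj nxy h. Qed.

Lemma connect_sub_adj F F' : F \subset F' -> forall x y,
  connect (adj F) x y -> connect (adj F') x y.
Proof.
move=> sF; apply: (connect_map (f := id)) => u v h; apply: connect1.
exact: adj_sub h.
Qed.

Lemma acyclic_sub F F' : F \subset F' -> acyclic F' -> acyclic F.
Proof.
move=> sF /forall_inP H; apply/forall_inP => e eF.
apply/forallP => x; apply/forallP => y; apply/implyP => exy.
move: (H e (subsetP sF e eF)) => /forallP /(_ x) /forallP /(_ y) /implyP /(_ exy).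
apply: contra; apply: connect_sub_adj; exact: setSD.
Qed.

Lemma connect_del F e x y : e = [set x; y] ->
  connect (adj (F :\ e)) x y ->
  forall u v, connect (adj F) u v -> connect (adj (F :\ e)) u v.
Proof.
move=> ee cxy; apply: (connect_map (f := id)) => u v /= /andP [nuv uvF].
case: (eqVneq [set u; v] e) => [E|ne].
  rewrite ee in E; case: (set2_eq E) => [[-> ->] //|[-> ->]].
  by rewrite connect_adj_sym.
by apply: connect1; rewrite /adj nuv !inE ne.
Qed.

Lemma span_sub V F : edges_in V F -> connected_on V F ->
  exists2 S : {set {set U}}, S \subset F & is_spanning_tree V S.
Proof.
elim: {F}_.+1 {-2}F (ltnSn #|F|) => // n IH F ltF eFV cFV.
case: (boolP (acyclic F)) => [acF|].
  by exists F => //; rewrite /is_spanning_tree eFV cFV acF.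
rewrite negb_forall_in => /exists_inP [e eF].
move=> /existsP [x] /existsP [y]; rewrite negb_imply negbK.
move=> /andP [/andP [/eqP exy xny] cxy].
have sub : F :\ e \subset F by exact: subsetDl.
have [|||S sS tS] := IH (F :\ e).
- by rewrite -ltnS (leq_trans _ ltF) // ltnS (cardsD1 e F) eF.
- apply/forall_inP => f /(subsetP sub) fF.
  by move/forall_inP: eFV => /(_ f fF).
- apply/forall_inP => u uV; apply/forall_inP => v vV.
  apply: (connect_del exy cxy).
  by move/forall_inP: cFV => /(_ u uV) /forall_inP /(_ v vV).
by exists S => //; exact: subset_trans sS sub.
Qed.

End Gen.
Section Or.
Variable U : finType.

Lemma orient (S : {set {set U}}) (v : U) : {in S, forall e : {set U}, #|e| = 2%N} -> acyclic S ->
  exists phi : {set U} -> U,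
    [/\ {in S, forall e : {set U}, phi e \in e}, {in S &, injective phi} & {in S, forall e : {set U}, phi e != v}].
Proof.
elim: {S}_.+1 {-2}S (ltnSn #|S|) v => // n IH S ltS v S2 acS.
case: (set_0Vmem S) => [->|[e eS]].
  by exists (fun _ => v); split => ?; rewrite inE.
have /cards2P [x [y [nxy ee]]] : #|e| == 2%N by rewrite S2.
have ncon : ~~ connect (adj (S :\ e)) x y.
  move/forall_inP: acS => /(_ e eS) /forallP /(_ x) /forallP /(_ y) /implyP; apply.
  by rewrite ee eqxx nxy.
pose S' := S :\ e.
pose K := [set u | connect (adj S') x u].
pose S1 := [set f in S' | f \subset K].
pose S2' := S' :\: S1.
have xK : x \in K by rewrite inE connect0.
have yK : y \notin K by rewrite inE.
have S'S : S' \subset S by exact: subsetDl.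
have S1S' : S1 \subset S' by apply/subsetP => f; rewrite inE => /andP [].
have S2S' : S2' \subset S' by exact: subsetDl.
have cS' : (#|S'| < n)%N.
  by rewrite -ltnS (leq_trans _ ltS) // ltnS (cardsD1 e S) eS.
have IH1 := IH S1 (leq_ltn_trans (subset_leq_card S1S') cS').
have IH2 := IH S2' (leq_ltn_trans (subset_leq_card S2S') cS').
have ac1 : acyclic S1 by apply: acyclic_sub acS; exact: subset_trans S1S' S'S.
have ac2 : acyclic S2' by apply: acyclic_sub acS; exact: subset_trans S2S' S'S.
have s1 : {in S1, forall f : {set U}, #|f| = 2%N}.
  by move=> f fS; apply: S2; apply: (subsetP S'S); apply: (subsetP S1S').
have s2 : {in S2', forall f : {set U}, #|f| = 2%N}.
  by move=> f fS; apply: S2; apply: (subsetP S'S); apply: (subsetP S2S').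
have inK1 : forall f u, f \in S1 -> u \in f -> u \in K.
  by move=> f u; rewrite inE => /andP [_ /subsetP h] /h.
have inK2 : forall f u, f \in S2' -> u \in f -> u \notin K.
  move=> f u fS uf; apply/negP => uK.
  have fS' : f \in S' by exact: (subsetP S2S').
  move: (fS); rewrite inE fS' andbT => /negP; apply; rewrite inE fS' /=.
  have /cards2P [a [b [nab fe]]] : #|f| == 2%N by rewrite (s2 f fS).
  have ab : adj S' a b by rewrite /adj nab -fe.
  apply/subsetP => w; rewrite fe !inE => /orP [] /eqP ->;
  move: uf; rewrite fe !inE => /orP [] /eqP ue; move: uK; rewrite ue inE //.
  - by move=> h; apply: connect_trans h (connect1 _); rewrite adj_sym.
  - by move=> h; apply: connect_trans h (connect1 ab).
have classify : forall f, f \in S -> [\/ f \in S1, f \in S2' | f = e].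
  move=> f fS; case: (eqVneq f e) => [->|fne]; first by constructor 3.
  have fS' : f \in S' by rewrite !inE fne.
  by case: (boolP (f \in S1)) => h; [constructor 1|constructor 2; rewrite inE h].
have eS1 : e \notin S1 by apply/negP => /(subsetP S1S'); rewrite !inE eqxx.
have eS2 : e \notin S2' by apply/negP => /(subsetP S2S'); rewrite !inE eqxx.
have comb : forall r1 r2 c, c \in e -> (c == r1) || (c \notin K) ->
   (c == r2) || (c \in K) -> (v == r1) || (v \notin K) -> (v == r2) || (v \in K) ->
   c != v ->
   exists phi : {set U} -> U,
    [/\ {in S, forall e : {set U}, phi e \in e}, {in S &, injective phi} & {in S, forall e : {set U}, phi e != v}].
  move=> r1 r2 c ce c1 c2 v1 v2 cv.
  have [phi1 [p1e p1i p1v]] := IH1 r1 s1 ac1.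
  have [phi2 [p2e p2i p2v]] := IH2 r2 s2 ac2.
  pose phi f := if f \in S1 then phi1 f else if f \in S2' then phi2 f else c.
  have ph1 : forall f, f \in S1 -> phi f = phi1 f by move=> f h; rewrite /phi h.
  have ph2 : forall f, f \in S2' -> phi f = phi2 f.
    move=> f h; rewrite /phi h; case: ifP => // h1.
    by move: h; rewrite inE h1.
  have phe : phi e = c by rewrite /phi (negbTE eS1) (negbTE eS2).
  exists phi; split.
  - move=> f /classify [h|h|->]; [by rewrite ph1 // p1e|by rewrite ph2 // p2e|by rewrite phe].
  - have A1 : forall f, f \in S1 -> phi f != c.
      move=> f h; rewrite ph1 //; case/orP: c1 => [/eqP ->|cK]; first exact: p1v.
      by apply/eqP => E; move: cK; rewrite -E (inK1 _ _ h (p1e _ h)).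
    have A2 : forall f, f \in S2' -> phi f != c.
      move=> f h; rewrite ph2 //; case/orP: c2 => [/eqP ->|cK]; first exact: p2v.
      by apply/eqP => E; move: cK; rewrite -E (negbTE (inK2 _ _ h (p2e _ h))).
    have A12 : forall f g, f \in S1 -> g \in S2' -> phi f != phi g.
      move=> f g hf hg; rewrite ph1 // ph2 //; apply/eqP => E.
      by move: (inK1 _ _ hf (p1e _ hf)); rewrite E (negbTE (inK2 _ _ hg (p2e _ hg))).
    move=> f g /classify [hf|hf|->] /classify [hg|hg|->] E.
    + by apply: p1i => //; rewrite -(ph1 _ hf) -(ph1 _ hg).
    + by move: (A12 _ _ hf hg); rewrite E eqxx.
    + by move: (A1 _ hf); rewrite E phe eqxx.
    + by move: (A12 _ _ hg hf); rewrite E eqxx.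
    + by apply: p2i => //; rewrite -(ph2 _ hf) -(ph2 _ hg).
    + by move: (A2 _ hf); rewrite E phe eqxx.
    + by move: (A1 _ hg); rewrite -E phe eqxx.
    + by move: (A2 _ hg); rewrite -E phe eqxx.
    + by [].
  - move=> f /classify [h|h|->]; last by rewrite phe.
    + rewrite ph1 //; case/orP: v1 => [/eqP ->|vK]; first exact: p1v.
      by apply/eqP => E; move: vK; rewrite -E (inK1 _ _ h (p1e _ h)).
    + rewrite ph2 //; case/orP: v2 => [/eqP ->|vK]; first exact: p2v.
      by apply/eqP => E; move: vK; rewrite -E (negbTE (inK2 _ _ h (p2e _ h))).
case: (boolP (v \in K)) => vK.
  apply: (comb v y y); rewrite ?ee ?set22 ?eqxx ?yK ?vK ?orbT //.
  by apply/eqP => E; move: vK; rewrite -E (negbTE yK).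
apply: (comb x v x); rewrite ?ee ?set21 ?eqxx ?xK ?vK ?orbT //.
by apply/eqP => E; move: vK; rewrite -E xK.
Qed.
End Or.
Section Sums.
Variable R : realFieldType.

Lemma sum_sub_le (I : finType) (A B : {set I}) (G : I -> R) :
  A \subset B -> (forall i, i \in B -> 0 <= G i) ->
  \sum_(i in A) G i <= \sum_(i in B) G i.
Proof.
move=> sAB G0; rewrite [X in _ <= X](big_setID A) /= (setIidPr sAB) lerDl.
by apply: sumr_ge0 => i; rewrite inE => /andP [_ /G0].
Qed.

Lemma sum_setU_le (I : finType) (A B : {set I}) (G : I -> R) :
  (forall i, 0 <= G i) ->
  \sum_(i in A :|: B) G i <= \sum_(i in A) G i + \sum_(i in B) G i.
Proof.
move=> G0; rewrite (big_setID A) /= setUK setDUl setDv set0U lerD2l.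
by apply: sum_sub_le => //; exact: subsetDl.
Qed.

Lemma sum_imset_le (I J : finType) (h : I -> J) (A : {set I}) (G : J -> R) :
  (forall j, 0 <= G j) ->
  \sum_(j in h @: A) G j <= \sum_(i in A) G (h i).
Proof.
move=> G0; rewrite (partition_big_imset h) /=; apply: ler_sum => j /imsetP [i iA jE]; subst j.
rewrite (bigD1 i) /=; last by rewrite iA eqxx.
by rewrite lerDl; apply: sumr_ge0 => k _.
Qed.

Lemma sum_inj_le (I J : finType) (h : I -> J) (A : {set I}) (B : {set J}) (G : J -> R) :
  {in A &, injective h} -> (forall i, i \in A -> h i \in B) ->
  (forall j, j \in B -> 0 <= G j) ->
  \sum_(i in A) G (h i) <= \sum_(j in B) G j.
Proof.
move=> inj hB G0; rewrite -(big_imset _ inj) /=; apply: sum_sub_le => //.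
by apply/subsetP => j /imsetP [i iA ->]; exact: hB.
Qed.

Variable U : finType.
Implicit Types (c d : U -> U -> R) (F : {set {set U}}).

Lemma wedge2 c x y : x != y -> wedge c [set x; y] = (c x y + c y x) / 2%:R.
Proof.
move=> nxy; rewrite /wedge; congr (_ / _).
have ny : x \notin [set y] by rewrite inE.
under eq_bigr => i _ do rewrite big_mkcondr /= (big_setU1 _ ny) /= big_set1.
rewrite (big_setU1 _ ny) /= big_set1 !eqxx (negbTE nxy) eq_sym (negbTE nxy) /=.
by rewrite addr0 add0r addrC.
Qed.

Lemma metric_ge0 d : is_metric d -> forall x y, 0 <= d x y.
Proof.
move=> [d0 [ds dt]] x y; have := dt x y x; rewrite (proj2 (d0 x x) erefl) ds.
lra.
Qed.

Lemma wedge_metric d : is_metric d -> forall x y, x != y -> wedge d [set x; y] = d x y.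
Proof. move=> [d0 [ds dt]] x y nxy; rewrite wedge2 // ds; by field. Qed.

Lemma wedge_ge0 c : (forall x y, 0 <= c x y) -> forall e, 0 <= wedge c e.
Proof.
move=> c0 e; rewrite /wedge divr_ge0 ?ler0n //.
by apply: sumr_ge0 => x _; apply: sumr_ge0 => y _.
Qed.

Lemma wset_ge0 c : (forall x y, 0 <= c x y) -> forall F, 0 <= wset c F.
Proof. by move=> c0 F; apply: sumr_ge0 => e _; exact: wedge_ge0. Qed.

Lemma wset_sub c : (forall x y, 0 <= c x y) -> forall F F',
  F \subset F' -> wset c F <= wset c F'.
Proof. by move=> c0 F F' sF; apply: sum_sub_le => // e _; exact: wedge_ge0. Qed.

Lemma wset_U c : (forall x y, 0 <= c x y) -> forall F F',
  wset c (F :|: F') <= wset c F + wset c F'.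
Proof. by move=> c0 F F'; apply: sum_setU_le => e; exact: wedge_ge0. Qed.

Lemma path_weight d : is_metric d -> forall F x y,
  connect (adj F) x y -> d x y <= wset d F.
Proof.
move=> dm; have d0 := metric_ge0 dm; have [dxx [ds dt]] := dm.
move=> F; elim: {F}_.+1 {-2}F (ltnSn #|F|) => // n IH F ltF x y.
move/connectP => [p pth ->]; case: (shortenP pth) => [[|z q]] /=.
  move=> _ _ _; rewrite (proj2 (dxx x x) erefl); exact: wset_ge0.
move=> /andP [axz qth] /andP [xzq uq] _.
have [nxz ezF] := andP axz.
set e := [set x; z].
have cF : (#|F :\ e| < n)%N.
  by rewrite -ltnS (leq_trans _ ltF) // ltnS (cardsD1 e F) ezF.
have qth' : path (adj (F :\ e)) z q.
  apply: (sub_in_path (P := predC1 x)) qth; last first.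
    by apply/allP => u uzq /=; apply/eqP => E; move: xzq; rewrite -E uzq.
  move=> u v /= ux vx /andP [nuv uvF]; rewrite /adj nuv !inE uvF andbT.
  apply/eqP => E; have : x \in [set u; v] by rewrite E set21.
  by rewrite !inE eq_sym (negbTE ux) eq_sym (negbTE vx).
have := IH _ cF z (last z q) (connect_trans (connect0 _ _) _).
move=> /(_ _) H; have {}H := H (introT connectP (ex_intro2 _ _ q qth' erefl)).
rewrite /wset (big_setD1 e ezF) /= -/(wset d (F :\ e)) wedge_metric //.
by apply: le_trans (dt x z (last z q)) _; rewrite lerD2l.
Qed.

End Sums.

Section Main.
Variables (R : realFieldType) (T : finType) (d : T -> T -> R)
  (P : {set {set T}}) (tr : {set T} -> {set {set T}})
  (r : {set T} -> T) (rec : {set T} -> {set T} -> T * T)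
  (M : {set {set {set T}}}).
Hypotheses (dm : is_metric d) (hP : partition P [set: T])
  (htr : forall B, B \in P -> is_spanning_tree B (tr B))
  (hr : forall B, B \in P -> r B \in B) (hrec : rec_ok d P r rec)
  (hM : is_mst P (hatw d rec) M).

Let d0 := metric_ge0 dm.
Let dsym : forall x y, d x y = d y x. Proof. by case: dm => _ []. Qed.
Let dtri : forall x y z, d x z <= d x y + d y z. Proof. by case: dm => _ []. Qed.

Definition pt (x : T) := pblock P x.

Lemma coverP : cover P = [set: T].
Proof. by case/and3P: hP => /eqP. Qed.
Lemma trivP : trivIset P.
Proof. by case/and3P: hP. Qed.

Lemma ptP x : pt x \in P.
Proof. by rewrite /pt pblock_mem // coverP. Qed.
Lemma in_pt x : x \in pt x.
Proof. by rewrite /pt mem_pblock coverP. Qed.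
Lemma pt_eq B x : B \in P -> x \in B -> pt x = B.
Proof. by move=> BP xB; rewrite /pt (def_pblock trivP BP xB). Qed.
Lemma part_eq B C x : B \in P -> C \in P -> x \in B -> x \in C -> B = C.
Proof. by move=> BP CP xB xC; rewrite -(pt_eq BP xB) (pt_eq CP xC). Qed.

Lemma rec_in B C : B \in P -> C \in P -> B != C ->
  (rec B C).1 \in B /\ (rec B C).2 \in C.
Proof.
move=> BP CP nBC; have [+ _ _] := hrec BP CP nBC.
rewrite /cand => /orP [/andP [h /eqP ->]|/andP [/eqP -> h]]; split => //; exact: hr.
Qed.

Lemma rec_swap B C : B \in P -> C \in P -> B != C ->
  rec C B = ((rec B C).2, (rec B C).1).
Proof. by move=> BP CP nBC; have [_ _ ->] := hrec BP CP nBC. Qed.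

Lemma rec_ne B C : B \in P -> C \in P -> B != C -> (rec B C).1 != (rec B C).2.
Proof.
move=> BP CP nBC; have [h1 h2] := rec_in BP CP nBC.
apply/eqP => E; move: h1; rewrite E => h1.
by move: nBC; rewrite (part_eq BP CP h1 h2) eqxx.
Qed.

Lemma hatw_sym B C : B \in P -> C \in P -> B != C -> hatw d rec B C = hatw d rec C B.
Proof. by move=> BP CP nBC; rewrite /hatw (rec_swap BP CP nBC) /= dsym. Qed.

Lemma hatw_le1 B C a : B \in P -> C \in P -> B != C -> a \in B ->
  hatw d rec B C <= d a (r C).
Proof.
move=> BP CP nBC aB; have [_ + _] := hrec BP CP nBC; apply.
by rewrite /cand aB eqxx.
Qed.

Lemma wedge_hatw B C : B \in P -> C \in P -> B != C ->
  wedge (hatw d rec) [set B; C] = hatw d rec B C.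
Proof. by move=> BP CP nBC; rewrite wedge2 // -(hatw_sym BP CP nBC); field. Qed.

Lemma tr_edge B e : B \in P -> e \in tr B -> #|e| = 2%N /\ e \subset B.
Proof.
move=> BP eB; have /and3P [/forall_inP h _ _] := htr BP.
by have /andP [/eqP -> ->] := h e eB.
Qed.

Lemma M_edge E : E \in M -> exists B C, [/\ B \in P, C \in P, B != C & E = [set B; C]].
Proof.
move=> EM; have /andP [/and3P [/forall_inP h _ _] _] := hM.
have /andP [/cards2P [B [C [nBC ->]]] sub] := h E EM.
by exists B, C; split => //; apply: (subsetP sub); rewrite !inE eqxx ?orbT.
Qed.

Lemma M_edgeP B C : [set B; C] \in M -> [/\ B \in P, C \in P & B != C].
Proof.
move=> /M_edge [B' [C' [BP CP nBC E]]].
case: (set2_eq E) => [[-> ->]|[-> ->]]; split => //; by rewrite eq_sym.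
Qed.

Definition Nset := [set [set (rec B C).1; (rec B C).2] | B in P, C in P & [set B; C] \in M].

Lemma NsetP e : e \in Nset -> exists B C, [/\ [set B; C] \in M, B \in P, C \in P, B != C &
   e = [set (rec B C).1; (rec B C).2]].
Proof.
case/imset2P => B C BP; rewrite inE => /andP [CP EM] ->.
by have [_ _ nBC] := M_edgeP EM; exists B, C; split.
Qed.

Lemma EtP e : e \in Et P tr -> exists2 B, B \in P & e \in tr B.
Proof. by case/bigcupP => B BP eB; exists B. Qed.

Lemma Et_edge e : e \in Et P tr -> exists x y, [/\ x != y, pt x = pt y & e = [set x; y]].
Proof.
case/EtP => B BP eB; have [e2 sub] := tr_edge BP eB.
have /cards2P [x [y [nxy ee]]] : #|e| == 2%N by rewrite e2.
exists x, y; split => //.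
have xB : x \in B by apply: (subsetP sub); rewrite ee set21.
have yB : y \in B by apply: (subsetP sub); rewrite ee set22.
by rewrite (pt_eq BP xB) (pt_eq BP yB).
Qed.

Definition out := mfc_output P tr rec M.

Lemma outE : out = Et P tr :|: Nset.
Proof. by []. Qed.

Lemma out_edge e : e \in out -> exists x y, x != y /\ e = [set x; y].
Proof.
rewrite outE inE => /orP [/Et_edge [x [y [nxy _ ee]]]|/NsetP [B [C [_ BP CP nBC ->]]]].
  by exists x, y.
by exists (rec B C).1, (rec B C).2; split => //; exact: rec_ne.
Qed.

Lemma conn_part B x y : B \in P -> x \in B -> y \in B -> connect (adj out) x y.
Proof.
move=> BP xB yB; have /and3P [_ /forall_inP c _] := htr BP.
have := c x xB => /forall_inP /(_ y yB); apply: connect_sub_adj.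
apply/subsetP => e eB; rewrite outE inE; apply/orP; left.
by apply/bigcupP; exists B.
Qed.

Lemma conn_M B C : connect (adj M) B C -> B \in P -> forall x y, x \in B -> y \in C ->
  connect (adj out) x y.
Proof.
move/connectP => [p pth ->]; elim: p B pth => [|C' p IH] B /=.
  by move=> _ BP x y; apply: conn_part.
move=> /andP [/andP [nBC EM] pth] BP x y xB yC.
have [_ C'P _] := M_edgeP EM.
have [h1 h2] := rec_in BP C'P nBC.
apply: connect_trans (conn_part BP xB h1) _.
apply: connect_trans (IH _ pth C'P _ _ h2 yC).
apply: connect1; rewrite /adj rec_ne // outE inE; apply/orP; right.
by apply/imset2P; exists B C' => //; rewrite inE C'P.
Qed.


Lemma conn_step (U : finType) (F : {set {set U}}) u v w :
  adj F u v -> connect (adj F) w u = connect (adj F) w v.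
Proof.
move=> a; apply/idP/idP => h; first exact: connect_trans h (connect1 a).
by apply: connect_trans h (connect1 _); rewrite adj_sym.
Qed.

Lemma not_conn_cut (U : finType) (F : {set {set U}}) e x y (K : {set U}) :
  (forall f u v, f \in F -> f != e -> u != v -> f = [set u; v] -> (u \in K) = (v \in K)) ->
  (x \in K) != (y \in K) -> ~~ connect (adj (F :\ e)) x y.
Proof.
move=> H nK; apply/negP => c; move: nK.
rewrite (connect_cut (K := K) _ c) ?eqxx // => u v /andP [nuv].
rewrite !inE => /andP [fe fF]; exact: H fF fe nuv erefl.
Qed.

Lemma M_acyc B C : [set B; C] \in M -> B != C -> ~~ connect (adj (M :\ [set B; C])) B C.
Proof.
move=> EM nBC; have /andP [/and3P [_ _ /forall_inP ac] _] := hM.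
by move: (ac _ EM) => /forallP /(_ B) /forallP /(_ C) /implyP; apply; rewrite eqxx nBC.
Qed.

Lemma tr_acyc B x y : B \in P -> [set x; y] \in tr B -> x != y ->
  ~~ connect (adj (tr B :\ [set x; y])) x y.
Proof.
move=> BP eB nxy; have /and3P [_ _ /forall_inP ac] := htr BP.
by move: (ac _ eB) => /forallP /(_ x) /forallP /(_ y) /implyP; apply; rewrite eqxx nxy.
Qed.

Lemma set2_K (K : {set T}) u v a b : u != v -> [set u; v] = [set a; b] ->
  (a \in K) = (b \in K) -> (u \in K) = (v \in K).
Proof. by move=> _ /set2_eq [[-> ->]|[-> ->]]. Qed.

Lemma set2_Kne (K : {set T}) u v a b : [set u; v] = [set a; b] ->
  (a \in K) != (b \in K) -> (u \in K) != (v \in K).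
Proof. by move=> /set2_eq [[-> ->]|[-> ->]] //; rewrite eq_sym. Qed.

Lemma out_edges : edges_in [set: T] out.
Proof.
apply/forall_inP => e /out_edge [x [y [nxy ->]]].
by rewrite cards2 nxy subsetT.
Qed.

Lemma out_conn : connected_on [set: T] out.
Proof.
apply/forall_inP => x _; apply/forall_inP => y _.
have /andP [/and3P [_ /forall_inP c _] _] := hM.
have := c _ (ptP x) => /forall_inP /(_ _ (ptP y)) h.
exact: conn_M h (ptP x) _ _ (in_pt x) (in_pt y).
Qed.

Lemma acyc_N B C x y : [set B; C] \in M -> B \in P -> C \in P -> B != C ->
  [set (rec B C).1; (rec B C).2] = [set x; y] ->
  ~~ connect (adj (out :\ [set x; y])) x y.
Proof.
move=> EM BP CP nBC ee.
pose KP := [set D | connect (adj (M :\ [set B; C])) B D].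
pose K := [set u | pt u \in KP].
have [a1 b1] := rec_in BP CP nBC.
apply: (not_conn_cut (K := K)).
  move=> f u v; rewrite outE inE => /orP [/Et_edge [x' [y' [_ pe fe]]]|].
    move=> _ nuv fuv; apply: (set2_K nuv (esym _)); first by rewrite -fuv fe.
    by rewrite !inE pe.
  move=> /NsetP [B' [C' [EM' BP' CP' nBC' fe]]] fne nuv fuv.
  apply: (set2_K nuv (esym _)); first by rewrite -fuv fe.
  have [a1' b1'] := rec_in BP' CP' nBC'.
  rewrite !inE (pt_eq BP' a1') (pt_eq CP' b1').
  case: (eqVneq [set B'; C'] [set B; C]) => [E|ne].
    case: (set2_eq E) => [[eB eC]|[eB eC]]; subst B' C'.
      by move: fne; rewrite fe ee eqxx.
    by move: fne; rewrite fe (rec_swap BP CP nBC) /= setUC ee eqxx.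
  apply: conn_step; rewrite /adj nBC' !inE ne EM' //.
apply: (set2_Kne (esym ee)).
rewrite !inE (pt_eq BP a1) (pt_eq CP b1) connect0.
by rewrite (negbTE (M_acyc EM nBC)).
Qed.

Lemma acyc_Et B x y : B \in P -> [set x; y] \in tr B -> x != y ->
  ~~ connect (adj (out :\ [set x; y])) x y.
Proof.
move=> BP eB nxy.
set e := [set x; y].
pose KB := [set u | connect (adj (tr B :\ e)) x u].
pose MB := [set E in M | B \notin E].
pose Q (D : {set T}) := [exists D', [&& D' \in P, [set B; D'] \in M,
   (rec B D').1 \in KB & connect (adj MB) D' D]].
pose K := [set u | if pt u == B then u \in KB else Q (pt u)].
have [_ eBsub] := tr_edge BP eB.
have xB : x \in B by apply: (subsetP eBsub); rewrite set21.
have yB : y \in B by apply: (subsetP eBsub); rewrite set22.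
have PLB : forall C1, [set B; C1] \in M ->
    ((rec B C1).1 \in K) = ((rec B C1).2 \in K).
  move=> C1 EM; have [_ C1P nBC1] := M_edgeP EM.
  have [a1 b1] := rec_in BP C1P nBC1.
  rewrite !inE (pt_eq BP a1) (pt_eq C1P b1) eqxx eq_sym (negbTE nBC1).
  apply/idP/existsP => [h|[D' /and4P [D'P EM' aK cD]]].
    by exists C1; rewrite C1P EM connect0 andbT inE.
  case: (eqVneq D' C1) => [eD|nD]; first by subst D'; rewrite inE in aK.
  have [_ _ nBD] := M_edgeP EM'.
  have := M_acyc EM nBC1.
  case/negP; apply: (@connect_trans _ _ D').
    apply: connect1; rewrite /adj nBD !inE EM' andbT.
    by apply/eqP => /set2_eq [[_ E]|[E _]]; [move: nD; rewrite E eqxx|move: nBC1; rewrite E eqxx].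
  apply: connect_sub_adj cD; apply/subsetP => E; rewrite !inE => /andP [-> nE].
  by rewrite andbT; apply/eqP => E'; move: nE; rewrite E' set21.
have PL : forall B1 C1, [set B1; C1] \in M ->
    ((rec B1 C1).1 \in K) = ((rec B1 C1).2 \in K).
  move=> B1 C1 EM; have [B1P C1P nBC1] := M_edgeP EM.
  case: (eqVneq B1 B) => [eB1|nB1]; first by subst B1; exact: PLB.
  case: (eqVneq C1 B) => [eC1|nC1].
    subst C1; rewrite (rec_swap C1P B1P) /=; last by rewrite eq_sym.
    by rewrite PLB // setUC.
  have [a1 b1] := rec_in B1P C1P nBC1.
  rewrite !inE (pt_eq B1P a1) (pt_eq C1P b1) (negbTE nB1) (negbTE nC1).
  have adjB : adj MB B1 C1.
    rewrite /adj nBC1 !inE EM /= !negb_or.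
    by rewrite eq_sym nB1 eq_sym nC1.
  by apply: eq_existsb => D'; rewrite (conn_step _ adjB).
apply: (not_conn_cut (K := K)); last first.
  rewrite !inE (pt_eq BP xB) (pt_eq BP yB) eqxx connect0.
  by rewrite (negbTE (tr_acyc BP eB nxy)).
move=> f u v; rewrite outE inE => /orP [fEt|].
  move=> fne nuv fuv; have [D DP fD] := EtP fEt.
  have [_ fsub] := tr_edge DP fD.
  have uD : u \in D by apply: (subsetP fsub); rewrite fuv set21.
  have vD : v \in D by apply: (subsetP fsub); rewrite fuv set22.
  rewrite !inE (pt_eq DP uD) (pt_eq DP vD).
  case: (eqVneq D B) => [eD|//]; subst D.
  apply: conn_step; rewrite /adj nuv !inE -fuv fne fD.
  done.
move=> /NsetP [B' [C' [EM' BP' CP' nBC' fe]]] fne nuv fuv.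
apply: (set2_K (a := (rec B' C').1) (b := (rec B' C').2) nuv); first by rewrite -fuv fe.
exact: PL EM'.
Qed.

Lemma out_acyc : acyclic out.
Proof.
apply/forall_inP => e eout; apply/forallP => x; apply/forallP => y.
apply/implyP => /andP [/eqP ee nxy]; subst e.
move: eout; rewrite outE inE => /orP [/EtP [B BP eB]|/NsetP [B [C [EM BP CP nBC ee]]]].
  exact: (acyc_Et BP eB nxy).
exact: (acyc_N EM BP CP nBC (esym ee)).
Qed.

Lemma out_tree : is_spanning_tree [set: T] out.
Proof. by rewrite /is_spanning_tree out_edges out_conn out_acyc. Qed.

Definition pick1 (E : {set {set T}}) := odflt set0 [pick B in E].
Definition pick2 (E : {set {set T}}) := odflt set0 [pick C in E :\ pick1 E].

Lemma pick_pair (B C : {set T}) : B != C ->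
  (pick1 [set B; C] = B /\ pick2 [set B; C] = C) \/ (pick1 [set B; C] = C /\ pick2 [set B; C] = B).
Proof.
move=> nBC; rewrite /pick2 /pick1.
case: pickP => [B' B'in|none]; last by move: (none B); rewrite set21.
have hB : (B' == B) || (B' == C) by move: B'in; rewrite !inE.
case: pickP => [C' C'in|none] /=.
  move: C'in; rewrite !inE => /andP [nC' hC].
  case/orP: hB => /eqP eB; case/orP: hC => /eqP eC; subst B' C';
    rewrite ?eqxx in nC'; by [left|right].
case/orP: hB => /eqP eB; subst B'.
  by move: (none C); rewrite !inE eqxx orbT andbT eq_sym nBC.
by move: (none B); rewrite !inE eqxx /= nBC.
Qed.

Definition gM (E : {set {set T}}) := [set (rec (pick1 E) (pick2 E)).1; (rec (pick1 E) (pick2 E)).2].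

Lemma hatw_ge0 B C : 0 <= hatw d rec B C.
Proof. exact: d0. Qed.

Lemma gM_w E : E \in M -> wedge d (gM E) = wedge (hatw d rec) E.
Proof.
move=> /M_edge [B [C [BP CP nBC ->]]]; rewrite /gM.
case: (pick_pair nBC) => [[-> ->]|[-> ->]].
  by rewrite wedge_metric ?rec_ne // wedge_hatw.
rewrite wedge_metric ?rec_ne // 1?eq_sym // setUC wedge_hatw // 1?eq_sym //.
Qed.

Lemma Nset_le : wset d Nset <= wset (hatw d rec) M.
Proof.
have sub : Nset \subset gM @: M.
  apply/subsetP => e /NsetP [B [C [EM BP CP nBC ->]]].
  apply/imsetP; exists [set B; C] => //; rewrite /gM.
  case: (pick_pair nBC) => [[-> ->]|[-> ->]] //.
  by rewrite (rec_swap BP CP nBC) /= setUC.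
apply: le_trans (wset_sub _ sub) _; first exact: d0.
apply: le_trans (sum_imset_le _ _ _) _; first by move=> e; exact: wedge_ge0.
by apply: ler_sum => E EM; rewrite gM_w.
Qed.

Lemma Et_sum : \sum_(B in P) wset d (tr B) <= wset d (Et P tr).
Proof.
rewrite /wset pair_big_dep /=.
pose A := [set p : {set T} * {set T} | (p.1 \in P) && (p.2 \in tr p.1)].
rewrite (eq_bigl (fun p => p \in A)); last by move=> p; rewrite inE.
apply: (sum_inj_le (h := snd)).
- move=> [B e] [C f]; rewrite !inE /= => /andP [BP eB] /andP [CP fC] ef; subst f.
  have [e2 eBs] := tr_edge BP eB; have [_ eCs] := tr_edge CP fC.
  have /cards2P [x [y [_ ee]]] : #|e| == 2%N by rewrite e2.
  have xB : x \in B by apply: (subsetP eBs); rewrite ee set21.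
  have xC : x \in C by apply: (subsetP eCs); rewrite ee set21.
  by rewrite (part_eq BP CP xB xC).
- by move=> [B e]; rewrite inE /= => /andP [BP eB]; apply/bigcupP; exists B.
- by move=> e _; exact: wedge_ge0.
Qed.

Lemma part_nonempty B : B \in P -> exists x, x \in B.
Proof.
move=> BP; case/and3P: hP => _ _ n0; case: (set_0Vmem B) => [E|[x xB]]; last by exists x.
by move: n0; rewrite -E BP.
Qed.

Lemma tr_conn B x y : B \in P -> x \in B -> y \in B -> connect (adj (tr B)) x y.
Proof.
move=> BP xB yB; have /and3P [_ /forall_inP c _] := htr BP.
by have := c x xB => /forall_inP /(_ y yB).
Qed.

Lemma core (F : {set {set T}}) : edges_in [set: T] F -> connected_on [set: T] F ->
  wset d out <= 2%:R * wset d (Et P tr) + wset d (F :\: intra P F).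
Proof.
move=> eF cF.
pose G := [set E : {set {set T}} | [exists a, exists b,
   [&& [set a; b] \in F, pt a != pt b & E == [set pt a; pt b]]]].
have eG : edges_in P G.
  apply/forall_inP => E; rewrite inE => /existsP [a] /existsP [b] /and3P [_ nab /eqP ->].
  rewrite cards2 nab eqxx /=; apply/subsetP => D; rewrite !inE => /orP [] /eqP ->;
  exact: ptP.
have cG : connected_on P G.
  apply/forall_inP => B BP; apply/forall_inP => C CP.
  have [x xB] := part_nonempty BP; have [y yC] := part_nonempty CP.
  rewrite -(pt_eq BP xB) -(pt_eq CP yC).
  apply: (connect_map (e1 := adj F) (f := pt)) => [u v /andP [nuv uvF]|].
    case: (eqVneq (pt u) (pt v)) => [->|npt]; first exact: connect0.
    apply: connect1; rewrite /adj npt inE; apply/existsP; exists u; apply/existsP; exists v.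
    by rewrite uvF npt eqxx.
  by move/forall_inP: cF => /(_ x (in_setT x)) /forall_inP /(_ y (in_setT y)).
have [S SG /and3P [eS cS aS]] := span_sub eG cG.
have S2 : {in S, forall E : {set {set T}}, #|E| = 2%N}.
  by move=> E ES; move/forall_inP: eS => /(_ E ES) /andP [/eqP].
have [phi [phiE phiI _]] := orient set0 S2 aS.
have SP : forall E, E \in S -> E \subset P.
  by move=> E ES; move/forall_inP: eS => /(_ E ES) /andP [_].
pose cond E (ab : T * T) := [&& [set ab.1; ab.2] \in F, pt ab.1 != pt ab.2,
    E == [set pt ab.1; pt ab.2] & pt ab.2 == phi E].
have condex : forall E, E \in S -> exists ab, cond E ab.
  move=> E ES; have := subsetP SG E ES; rewrite inE => /existsP [a] /existsP [b].
  move=> /and3P [abF nab /eqP Eab].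
  have := phiE E ES; rewrite {2}Eab !inE => /orP [] /eqP ph.
    exists (b, a); rewrite /cond /= [[set b; a]]setUC abF eq_sym nab.
    by rewrite [[set pt b; pt a]]setUC -Eab ph !eqxx.
  by exists (a, b); rewrite /cond /= abF nab -Eab ph !eqxx.
pose fE E := if [pick ab | cond E ab] is Some ab then [set ab.1; ab.2] else set0.
have fEP : forall E, E \in S -> exists a b, [/\ fE E = [set a; b], [set a; b] \in F,
    pt a != pt b, E = [set pt a; pt b] & pt b = phi E].
  move=> E ES; rewrite /fE; case: pickP => [[a b] /and4P [abF nab /eqP Eab /eqP pb]|none].
    by exists a, b.
  by have [ab] := condex E ES; rewrite none.
have bound : forall E, E \in S ->
    wedge (hatw d rec) E <= wedge d (fE E) + wset d (tr (phi E)).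
  move=> E ES; have [a [b [-> abF nab Eab pb]]] := fEP E ES.
  have aP := ptP a; have bP := ptP b.
  have nab' : a != b by apply: contraNneq nab => ->.
  rewrite {1}Eab wedge_hatw // wedge_metric //.
  apply: le_trans (hatw_le1 aP bP nab (in_pt a)) _.
  apply: le_trans (dtri a b (r (pt b))) _; rewrite lerD2l -pb.
  apply: path_weight => //; apply: tr_conn => //; [exact: in_pt|exact: hr].
have sumS : wset (hatw d rec) S <=
    wset d (F :\: intra P F) + \sum_(B in P) wset d (tr B).
  apply: le_trans (ler_sum _ bound) _; rewrite big_split /=; apply: lerD.
    apply: (sum_inj_le (h := fE)).
    - move=> E E' ES ES'; have [a [b [-> _ _ Eab _]]] := fEP E ES.
      have [a' [b' [-> _ _ Eab' _]]] := fEP E' ES'.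
      by rewrite Eab Eab' => /set2_eq [[-> ->]|[-> ->]] //; rewrite setUC.
    - move=> E ES; have [a [b [-> abF nab _ _]]] := fEP E ES.
      rewrite !inE abF andbT; apply/existsP => [[D /andP [DP /subsetP sub]]].
      move: nab; rewrite (pt_eq DP (sub a (set21 a b))) (pt_eq DP (sub b (set22 a b))).
      by rewrite eqxx.
    - by move=> e _; exact: wedge_ge0.
  apply: (sum_inj_le (h := phi)) => //.
  - by move=> E ES; apply: (subsetP (SP E ES)); exact: phiE.
  - by move=> B _; exact: wset_ge0.
have hMS : wset (hatw d rec) M <= wset (hatw d rec) S.
  have /andP [_ /forallP /(_ S) /implyP] := hM; apply.
  by rewrite /is_spanning_tree eS cS aS.
apply: le_trans (wset_U d0 _ _) _.
have := Nset_le; have := Et_sum; lra.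
Qed.

Lemma Et_intra (F : {set {set T}}) : Et P tr \subset F -> Et P tr \subset intra P F.
Proof.
move=> sub; apply/subsetP => e eEt; rewrite inE (subsetP sub e eEt) /=.
have [B BP eB] := EtP eEt; have [_ eBs] := tr_edge BP eB.
by apply/existsP; exists B; rewrite BP.
Qed.

Lemma claim2 (F : {set {set T}}) : is_spanning_tree [set: T] F -> Et P tr \subset F ->
  wset d out <= 2%:R * wset d F.
Proof.
move=> /and3P [eF cF _] sub.
apply: le_trans (core eF cF) _.
have h1 : wset d (F :\: intra P F) <= wset d (F :\: Et P tr).
  by apply: wset_sub => //; apply: setDS; exact: Et_intra.
have h2 : wset d F = wset d (Et P tr) + wset d (F :\: Et P tr).
  by rewrite /wset (big_setID (Et P tr)) /= (setIidPr sub).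
have h3 : 0 <= wset d (F :\: Et P tr) by exact: wset_ge0.
rewrite h2; lra.
Qed.

Lemma bigmax_att (I : finType) (Pr : pred I) (g : I -> R) :
  0 < \big[Num.max/0]_(i | Pr i) g i ->
  exists i, Pr i /\ \big[Num.max/0]_(i | Pr i) g i = g i.
Proof.
have : (\big[Num.max/0]_(i | Pr i) g i = 0) \/
       exists i, Pr i /\ \big[Num.max/0]_(i | Pr i) g i = g i.
  pose K (v : R) := v = 0 \/ exists i, Pr i /\ v = g i.
  have : K (\big[Num.max/0]_(i | Pr i) g i).
    apply: big_ind => [|x y hx hy|i Pi]; first by left.
      by rewrite maxEle; case: ifP.
    by right; exists i.
  by [].
by case=> [->|//]; rewrite ltxx.
Qed.

Lemma claim3 : 0 < max_intra_mst d P ->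
  forall Tstar, is_mst [set: T] d Tstar ->
  wset d out <= 2%:R * gamma d P tr * wset d Tstar.
Proof.
move=> mpos Tstar hT.
have [T' [hT' mE]] := bigmax_att mpos.
rewrite /gamma -/(max_intra_mst d P) in mE *.
set m := max_intra_mst d P in mpos mE *.
set E := wset d (Et P tr).
set X := wset d (T' :\: intra P T').
have /andP [/and3P [eT cT aT] minT] := hT'.
have /andP [/and3P [eS cS aS] minS] := hT.
have c1 : wset d out <= 2%:R * E + X := core eT cT.
have WT : wset d T' = m + X.
  rewrite mE /wset (big_setID (intra P T')) /= (setIidPr _) //.
  by apply/subsetP => e; rewrite inE => /andP [].
have W1 : wset d T' <= wset d Tstar.
  by move/forallP: minT => /(_ Tstar) /implyP; apply; rewrite /is_spanning_tree eS cS aS.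
have W2 : wset d Tstar <= wset d T'.
  by move/forallP: minS => /(_ T') /implyP; apply; rewrite /is_spanning_tree eT cT aT.
have X0 : 0 <= X by exact: wset_ge0.
have mE' : m <= E.
  pose F2 := (T' :\: intra P T') :|: Et P tr.
  have eF2 : edges_in [set: T] F2.
    apply/forall_inP => e; rewrite inE => /orP [|/Et_edge [x [y [nxy _ ->]]]].
      rewrite inE => /andP [_ eT']; by move/forall_inP: eT => /(_ e eT').
    by rewrite cards2 nxy subsetT.
  have cF2 : connected_on [set: T] F2.
    apply/forall_inP => x _; apply/forall_inP => y _.
    move/forall_inP: cT => /(_ x (in_setT x)) /forall_inP /(_ y (in_setT y)).
    apply: (connect_map (e1 := adj T') (f := id)) => u v /andP [nuv uvT].
    case: (boolP ([set u; v] \in intra P T')) => hi.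
      move: hi; rewrite inE uvT /= => /existsP [D /andP [DP /subsetP sub]].
      have uD := sub u (set21 u v); have vD := sub v (set22 u v).
      apply: connect_sub_adj (tr_conn DP uD vD).
      apply/subsetP => e eD; rewrite inE; apply/orP; right.
      by apply/bigcupP; exists D.
    by apply: connect1; rewrite /adj nuv in_setU in_setD hi uvT.
  have [S2 sS2 tS2] := span_sub eF2 cF2.
  have h1 : wset d T' <= wset d S2.
    by move/forallP: minT => /(_ S2) /implyP; apply.
  have h2 : wset d S2 <= wset d F2 by apply: wset_sub.
  have h3 : wset d F2 <= X + E by apply: wset_U.
  lra.
have g1 : 1 <= E / m by rewrite ler_pdivlMr // mul1r.
have gm : E / m * m = E by rewrite divfK // gt_eqF.
set g := E / m in g1 gm *.
have Wst : wset d Tstar = m + X by apply/le_anti; rewrite -WT W1 W2.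
rewrite Wst.
have g0 : 0 <= g - 1 by rewrite subr_ge0.
have := mulr_ge0 g0 X0.
have -> : (g - 1) * X = g * X - X by ring.
have -> : 2%:R * g * (m + X) = 2%:R * (g * m) + 2%:R * (g * X) by ring.
rewrite gm => h; apply: le_trans c1 _; lra.
Qed.

Lemma main_all : let out := mfc_output P tr rec M in
  [/\ is_spanning_tree [set: T] out && (Et P tr \subset out),
      (forall F, is_spanning_tree [set: T] F -> Et P tr \subset F ->
         wset d out <= 2%:R * wset d F)
    & (0 < max_intra_mst d P ->
       forall Tstar, is_mst [set: T] d Tstar ->
         wset d out <= 2%:R * gamma d P tr * wset d Tstar)].
Proof using dm hP htr hr hrec hM.
move=> o; split.
- by rewrite out_tree /=; exact: subsetUl.
- exact: claim2.
- exact: claim3.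
Qed.

End Main.

Theorem corollary1 (R : realFieldType) (T : finType) (d : T -> T -> R)
  (P : {set {set T}}) (tr : {set T} -> {set {set T}})
  (r : {set T} -> T) (rec : {set T} -> {set T} -> T * T)
  (M : {set {set {set T}}}) :
  is_metric d ->
  partition P [set: T] ->
  (forall B, B \in P -> is_spanning_tree B (tr B)) ->
  (forall B, B \in P -> r B \in B) ->
  rec_ok d P r rec ->
  is_mst P (hatw d rec) M ->
  let out := mfc_output P tr rec M in
  [/\ is_spanning_tree [set: T] out && (Et P tr \subset out),
      (forall F, is_spanning_tree [set: T] F -> Et P tr \subset F ->
         wset d out <= 2%:R * wset d F)
    & (0 < max_intra_mst d P ->
       forall Tstar, is_mst [set: T] d Tstar ->
         wset d out <= 2%:R * gamma d P tr * wset d Tstar)].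
Proof.
move=> dm hP htr hr hrec hM.
exact: (main_all dm hP htr hr hrec hM).
Qed.
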